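(* Let $\kappa$ be a regular uncountable cardinal with $\kappa^{<\kappa}=\kappa$ and $\gamma^\omega<\kappa$ for all $\gamma<\kappa$. There is a $\kappa$-representation $\langle I^0_\alpha\mid\alpha<\kappa\rangle$ of $I^0$ such that for every limit ordinal $\delta<\kappa$ and every $\nu\in I^0$ with $\nu\notin I^0_\delta$ there is $\beta<\delta$ satisfying: for every $\sigma\in I^0_\delta$ with $\sigma>\nu$ there is $\sigma'\in I^0_\beta$ with $\sigma>\sigma'>\nu$.
   Context: Let $\mathbb Q$ be the rationals and order $\kappa\times\mathbb Q$ lexicographically. $I^0$ is the set of functions $f:\omega\to\kappa\times\mathbb Q$, written $f(n)=(f_1(n),f_2(n))$, such that $\{n<\omega\mid f_1(n)\ne0\}$ is finite, ordered by $f<g$ iff $f(n)<g(n)$ for the least $n$ with $f(n)\ne g(n)$. A $\kappa$-representation of a set $A$ of size $\le\kappa$ is an increasing continuous sequence of subsets of $A$, each of size $<\kappa$, whose union is $A$. *)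

(* Defs.v *)
From mathcomp Require Import all_boot all_order all_algebra.
Set Implicit Arguments. Unset Strict Implicit. Unset Printing Implicit Defensive.
Import Order.TTheory GRing.Theory Num.Theory.

Definition well_order (K : Type) (lt : K -> K -> Prop) : Prop :=
  well_founded lt /\ (forall x y z, lt x y -> lt y z -> lt x z) /\
  (forall x y, lt x y \/ x = y \/ lt y x).

(* The initial segment {beta | beta < alpha}, i.e. the ordinal alpha. *)
Definition seg (K : Type) (lt : K -> K -> Prop) (a : K) : Type := {b : K | lt b a}.

Definition injective_fun (X Y : Type) (f : X -> Y) : Prop :=
  forall x y, f x = f y -> x = y.

Definition inj_into (X Y : Type) : Prop := exists f : X -> Y, injective_fun f.

(* |X| < kappa, where kappa is the order type of (K, lt), assumed a cardinal:
   X injects into some ordinal alpha < kappa. *)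
Definition card_lt (K : Type) (lt : K -> K -> Prop) (X : Type) : Prop :=
  exists a : K, inj_into X (seg lt a).

Definition regular_uncountable_cardinal (K : Type) (lt : K -> K -> Prop) : Prop :=
  well_order lt /\
  (* kappa is a cardinal: no alpha < kappa has cardinality kappa *)
  (forall a : K, ~ inj_into K (seg lt a)) /\
  ~ inj_into K nat /\
  (* regular: every subset of size < kappa is bounded *)
  (forall S : K -> Prop, card_lt lt {b : K | S b} ->
      exists a : K, forall b, S b -> lt b a).

(* kappa^{<kappa} = kappa : for each gamma < kappa, |kappa^gamma| <= kappa. *)
Definition kappa_lt_kappa (K : Type) (lt : K -> K -> Prop) : Prop :=
  forall a : K, inj_into (seg lt a -> K) K.

Definition omega_powers_small (K : Type) (lt : K -> K -> Prop) : Prop :=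
  forall a : K, card_lt lt (nat -> seg lt a).

Definition is_zero (K : Type) (lt : K -> K -> Prop) (x : K) : Prop :=
  forall y, ~ lt y x.

Definition lexlt (K : Type) (lt : K -> K -> Prop) (p q : K * rat) : Prop :=
  lt p.1 q.1 \/ (p.1 = q.1 /\ (p.2 < q.2)%R).

(* I^0: functions f : omega -> kappa x Q with f_1(n) <> 0 for finitely many n. *)
Definition I0 (K : Type) (lt : K -> K -> Prop) : Type :=
  {f : nat -> K * rat | exists N : nat, forall n, (N <= n)%N -> is_zero lt (f n).1}.

Definition I0lt (K : Type) (lt : K -> K -> Prop) (f g : I0 lt) : Prop :=
  exists n : nat, (forall m, (m < n)%N -> proj1_sig f m = proj1_sig g m) /\
                  lexlt lt (proj1_sig f n) (proj1_sig g n).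

Definition is_limit (K : Type) (lt : K -> K -> Prop) (d : K) : Prop :=
  (exists b, lt b d) /\ (forall b, lt b d -> exists c, lt b c /\ lt c d).

Definition kappa_representation (K : Type) (lt : K -> K -> Prop) (A : Type)
    (I : K -> A -> Prop) : Prop :=
  (forall a b, lt a b -> forall x, I a x -> I b x) /\
  (forall d, is_limit lt d -> forall x, I d x -> exists a, lt a d /\ I a x) /\
  (forall a, card_lt lt {x : A | I a x}) /\
  (forall x : A, exists a, I a x).

(* Main.v *)
Require Import Defs.
From mathcomp Require Import all_boot all_order all_algebra.
From mathcomp Require Import lra.
From Stdlib Require Import Classical ProofIrrelevance FunctionalExtensionality.
Set Implicit Arguments. Unset Strict Implicit.

Lemma irrefl K (lt : K -> K -> Prop) (W : well_founded lt) x : ~ lt x x.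
Proof. induction (W x) as [x _ IH]. intro h. exact (IH x h h). Qed.

Lemma zero_eq K (lt : K -> K -> Prop) (H : well_order lt) x y :
  is_zero lt x -> is_zero lt y -> x = y.
Proof.
  destruct H as [_ [_ T]]. intros zx zy.
  destruct (T x y) as [h|[h|h]]; [exfalso; exact (zy _ h) | exact h | exfalso; exact (zx _ h)].
Qed.

Lemma zero_lt K (lt : K -> K -> Prop) (H : well_order lt) z b d :
  is_zero lt z -> lt b d -> lt z d.
Proof.
  destruct H as [_ [Tr T]]. intros zz hb.
  destruct (T z b) as [h|[h|h]]; [eauto | subst; auto | exfalso; exact (zz _ h)].
Qed.

Lemma bound K (lt : K -> K -> Prop) (H : well_order lt) (P : K -> Prop) :
  (forall x, P x -> exists c, lt x c /\ P c) ->
  forall (g : nat -> K) n, (forall k, (k <= n)%N -> P (g k)) ->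
  exists b, P b /\ forall k, (k <= n)%N -> lt (g k) b.
Proof.
  destruct H as [_ [Tr T]]. intros HP g n. induction n as [|n IH]; intros Hg.
  - destruct (HP (g 0%N) (Hg 0%N (leqnn 0))) as [c [h1 h2]]. exists c; split=>//.
    intros k; rewrite leqn0 => /eqP ->. exact h1.
  - destruct IH as [b [Pb Hb]]. { intros k hk; apply Hg; exact: leqW. }
    have Pg := Hg n.+1 (leqnn _).
    have [M [PM [bM gM]]] : exists M, P M /\ (lt b M \/ b = M) /\ (lt (g n.+1) M \/ g n.+1 = M).
    { destruct (T b (g n.+1)) as [h|[h|h]].
      - exists (g n.+1); auto.
      - exists b; subst; auto.
      - exists b; auto. }
    destruct (HP M PM) as [c [Mc Pc]]. exists c; split=>//.
    intros k; rewrite leq_eqVlt => /orP [/eqP -> | hk].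
    + destruct gM as [h|h]; [eauto | rewrite h; exact Mc].
    + rewrite ltnS in hk. have hkb := Hb k hk.
      destruct bM as [h|h]; [eauto | rewrite h in hkb; eauto].
Qed.

Lemma nomax K (lt : K -> K -> Prop) (H : regular_uncountable_cardinal lt) a :
  exists c, lt a c.
Proof.
  destruct H as [[W [Tr T]] [_ [Hnat Hreg]]].
  have [x [y xy]] : exists x y : K, x <> y.
  { apply NNPP => hn. apply Hnat. exists (fun _ => 0%N). intros x y _.
    apply NNPP => hxy. apply hn. exists x, y; exact hxy. }
  have [b [c bc]] : exists b c, lt b c.
  { destruct (T x y) as [h|[h|h]]; [exists x, y; exact h | contradiction | exists y, x; exact h]. }
  destruct (Hreg (fun z => z = a)) as [a' Ha'].
  { exists c. exists (fun _ => exist _ b bc). intros [u pu] [v pv] _.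
    subst u v. f_equal; try apply proof_irrelevance. }
  exists a'. apply Ha'. reflexivity.
Qed.

Lemma card_I K (lt : K -> K -> Prop) (H : regular_uncountable_cardinal lt)
  (Hom : omega_powers_small lt) a :
  card_lt lt {x : I0 lt | forall n, lt (proj1_sig x n).1 a}.
Proof.
  have [W [Tr T]] := proj1 H.
  destruct (nomax H a) as [c0 ac0]. destruct (nomax H c0) as [c c0c].
  have ac : lt a c by eauto.
  destruct (Hom c) as [c' [h hinj]].
  exists c'.
  pose F := fun (x : {x : I0 lt | forall n, lt (proj1_sig x n).1 a}) (j : nat) =>
    match (unpickle j : option (nat + (nat * nat))) with
    | Some (inl n) => exist (fun b => lt b c) (proj1_sig (proj1_sig x) n).1
                        (Tr _ _ _ (proj2_sig x n) ac)
    | Some (inr (n, i)) => if i == pickle (proj1_sig (proj1_sig x) n).2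
                           then exist (fun b => lt b c) c0 c0c
                           else exist (fun b => lt b c) a ac
    | None => exist (fun b => lt b c) a ac
    end.
  exists (fun x => h (F x)).
  intros x y hxy. apply hinj in hxy.
  have E : forall j, F x j = F y j by rewrite hxy.
  destruct x as [[fx px] qx]; destruct y as [[fy py] qy]; simpl in *.
  have Efun : fx = fy.
  { apply functional_extensionality => n.
    have E1 := E (pickle (inl n : nat + (nat*nat))). rewrite /F /= pickleK /= in E1.
    have E1' := f_equal (@proj1_sig _ _) E1. simpl in E1'.
    have E2 := E (pickle (inr (n, pickle (fx n).2) : nat + (nat*nat))).
    rewrite /F /= pickleK /= eqxx in E2.
    move: E2; case: ifP => [/eqP ep _ | _ E2].
    - have ep' := pcan_inj (@pickleK _) ep.
      apply: injective_projections; [exact E1' | exact ep'].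
    - exfalso. have e := f_equal (@proj1_sig _ _) E2. simpl in e.
      rewrite e in ac0. exact (irrefl W ac0). }
  subst fy. have -> : px = py by apply proof_irrelevance.
  f_equal. apply proof_irrelevance.
Qed.

Lemma minimal (P : nat -> Prop) : (exists n, P n) ->
  exists n, P n /\ forall k, (k < n)%N -> ~ P k.
Proof.
  intros [n Pn]. apply NNPP => hn.
  have A : forall m k, (k <= m)%N -> ~ P k.
  { elim => [|m IH] k hk.
    - rewrite leqn0 in hk. move/eqP: hk => -> P0. apply hn. exists 0%N; split; [exact P0| by []].
    - rewrite leq_eqVlt in hk. case/orP: hk => [/eqP -> | hk].
      + intro Pm. apply hn. exists m.+1; split; [exact Pm|]. intros k' hk'. apply IH. by rewrite -ltnS.
      + apply IH. by rewrite -ltnS. }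
  exact (A n n (leqnn n) Pn).
Qed.

Theorem mainTheorem9 (K : Type) (lt : K -> K -> Prop)
  (Hkappa : regular_uncountable_cardinal lt)
  (Hklk : kappa_lt_kappa lt)
  (Homega : omega_powers_small lt) :
  exists I : K -> I0 lt -> Prop,
    kappa_representation lt I /\
    forall d : K, is_limit lt d ->
    forall nu : I0 lt, ~ I d nu ->
    exists b : K, lt b d /\
      forall sigma : I0 lt, I d sigma -> I0lt nu sigma ->
      exists sigma' : I0 lt, I b sigma' /\ I0lt sigma' sigma /\ I0lt nu sigma'.
Proof.
  have WO := proj1 Hkappa.
  have [W [Tr T]] := WO.
  exists (fun a (f : I0 lt) => forall n, lt (proj1_sig f n).1 a).
  split; [split; [|split; [|split]] |].
  - intros a b ab x Hx n. eauto.
  - intros d Hd [f [N HN]] Hf. simpl in Hf.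
    have HP : forall x, lt x d -> exists c, lt x c /\ lt c d by apply Hd.
    destruct (@bound _ _ WO _ HP (fun k => (f k).1) N (fun k _ => Hf k)) as [b [bd Hb]].
    exists b; split=>//. intros n. simpl. case: (leqP n N) => hn. by apply Hb.
    have -> : (f n).1 = (f N).1 by apply (zero_eq WO); apply HN; [exact: ltnW | exact: leqnn].
    apply Hb; exact: leqnn.
  - intros a. exact (card_I Hkappa Homega a).
  - intros [f [N HN]].
    have HP : forall x, True -> exists c, lt x c /\ True.
    { intros x _. destruct (nomax Hkappa x) as [c hc]. exists c; auto. }
    destruct (@bound _ _ WO _ HP (fun k => (f k).1) N (fun k _ => I)) as [b [_ Hb]].
    exists b. intros n. simpl. case: (leqP n N) => hn. by apply Hb.
    have -> : (f n).1 = (f N).1 by apply (zero_eq WO); apply HN; [exact: ltnW | exact: leqnn].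
    apply Hb; exact: leqnn.
  - intros d Hd [nuf [N HN]] Hnu. simpl in Hnu.
    have [n1 hn1] : exists n, ~ lt (nuf n).1 d.
    { apply NNPP => hn. apply Hnu => n. apply NNPP => h. apply hn. exists n; exact h. }
    destruct (@minimal (fun n => ~ lt (nuf n).1 d) (ex_intro _ n1 hn1)) as [n0 [hn0 min0]].
    set z := (nuf N).1.
    have zz : is_zero lt z by apply HN.
    have HP : forall x, lt x d -> exists c, lt x c /\ lt c d by apply Hd.
    have zd : lt z d by destruct Hd as [[b0 hb0] _]; exact (zero_lt WO zz hb0).
    destruct (@bound _ _ WO _ HP (fun k => if (k < n0)%N then (nuf k).1 else z) n0) as [b [bd Hb]].
    { intros k _. simpl. case: ifP => hk //. apply NNPP. exact (min0 k hk). }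
    have Hb1 : forall k, (k < n0)%N -> lt (nuf k).1 b.
    { intros k hk. have := Hb k (ltnW hk). by rewrite /= hk. }
    have Hbz : lt z b by have := Hb n0 (leqnn _); rewrite /= ltnn.
    exists b. split=>//.
    intros [sf0 [Ns HNs]] Hs [m [Hagree Hlex]]. simpl in Hs, Hagree, Hlex.
    have hm : (m < n0)%N.
    { case: (ltngtP m n0) => // h.
      - exfalso. apply hn0. rewrite (Hagree n0 h). apply Hs.
      - exfalso. subst m. apply hn0. destruct Hlex as [h1|[h1 _]].
        + eapply Tr; [exact h1 | apply Hs].
        + rewrite h1; apply Hs. }
    have [q [q1 q2]] : exists q : rat, lexlt lt (nuf m) ((nuf m).1, q) /\
                                      lexlt lt ((nuf m).1, q) (sf0 m).
    { destruct Hlex as [h|[h1 h2]].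
      - exists ((nuf m).2 + 1)%R; rewrite /lexlt /=; split; [right; split; [done | lra] | left; exact h].
      - exists (((nuf m).2 + (sf0 m).2) / 2)%R; rewrite /lexlt /=; split; right; split => //; lra. }
    pose sf := fun k => if (k < m)%N then nuf k else if k == m then ((nuf m).1, q) else (z, 0%R).
    have sfI : exists N' : nat, forall n, (N' <= n)%N -> is_zero lt (sf n).1.
    { exists m.+1 => n hn. rewrite /sf.
      have -> : (n < m)%N = false by apply/negbTE; rewrite -leqNgt; exact: ltnW.
      have -> : (n == m) = false by apply/negbTE; rewrite neq_ltn hn orbT.
      exact zz. }
    exists (exist _ sf sfI). simpl. split; [|split].
    + intros n. rewrite /sf. case: ifP => h1.
      * apply Hb1. exact (ltn_trans h1 hm).
      * case: eqP => h2 /=; [exact (Hb1 m hm) | exact Hbz].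
    + exists m. split.
      * intros k hk. simpl. rewrite /sf hk. apply Hagree; exact hk.
      * simpl. rewrite /sf ltnn eqxx. exact q2.
    + exists m. split.
      * intros k hk. simpl. rewrite /sf hk. reflexivity.
      * simpl. rewrite /sf ltnn eqxx. exact q1.
Qed.
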